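(* If $m\ge 1$, $t\ge 1$ and $n=m(2^t-1)$, then \[s\text{-}sat(Q_n,Q_m)\le\Big(\frac{m^2}{2}+\frac{m}{2}\Big)2^n.\]
   Context: $Q_n$ is the hypercube on $\{0,1\}^n$ with edges between vertices differing in exactly one coordinate. A copy of $F$ is a subgraph isomorphic to $F$. A graph $G$ is $(Q_n,F)$-semi-saturated if $G\subseteq Q_n$ and adding any edge of $E(Q_n)\setminus E(G)$ increases the number of copies of $F$. $s\text{-}sat(Q_n,F)$ is the minimum number of edges of such a graph. *)

(* Defs.v *)
From mathcomp Require Import all_boot.
Set Implicit Arguments. Unset Strict Implicit. Unset Printing Implicit Defensive.

Definition vtx (n : nat) := {ffun 'I_n -> bool}.

Definition hdist (n : nat) (x y : vtx n) : nat := #|[set i | x i != y i]|.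

Definition qedges (n : nat) : {set {set vtx n}} :=
  [set e | [exists x, exists y, (e == [set x; y]) && (hdist x y == 1)]].

(* A graph G ⊆ Q_n on vertex set {0,1}^n is given by its edge set E. *)
Definition is_copy (n m : nat) (E : {set {set vtx n}})
    (p : {set vtx n} * {set {set vtx n}}) : bool :=
  let: (W, F) := p in
  [&& F \subset E,
      [forall f in F, f \subset W] &
      [exists phi : {ffun vtx m -> vtx n},
         [&& injectiveb phi, (phi @: setT) == W &
             [forall a, forall b,
               ([set a; b] \in qedges m) == ([set phi a; phi b] \in F)]]]].

Definition ncopies (n m : nat) (E : {set {set vtx n}}) : nat :=
  #|[set p | is_copy m E p]|.

Definition semisat (n m : nat) (E : {set {set vtx n}}) : bool :=
  (E \subset qedges n) &&
  [forall e in qedges n :\: E, ncopies m E < ncopies m (e |: E)].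

Lemma semisat_exists (n m : nat) :
  exists k, [exists E : {set {set vtx n}}, semisat m E && (#|E| == k)].
Proof.
exists #|qedges n|; apply/existsP; exists (qedges n).
rewrite /semisat subxx eqxx /=; apply/andP; split=> //.
by apply/forall_inP=> e; rewrite setDv inE.
Qed.

Definition ssat (n m : nat) : nat := ex_minn (semisat_exists n m).

(* Main.v *)
From Stdlib Require PeanoNat.
Require Import Defs.
From HB Require Import structures.
From Stdlib Require Import Lia.
From mathcomp Require Import all_boot.
From mathcomp Require Import zify.
Set Implicit Arguments. Unset Strict Implicit. Unset Printing Implicit Defensive.

Definition xr := Nat.lxor.
Lemma xrA : associative xr. Proof. move=> a b c; exact: (esym (PeanoNat.Nat.lxor_assoc a b c)). Qed.
Lemma xrC : commutative xr. Proof. move=> a b; exact: PeanoNat.Nat.lxor_comm. Qed.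
Lemma xr0 : left_id 0 xr. Proof. move=> a; exact: PeanoNat.Nat.lxor_0_l. Qed.
Lemma xrr a : xr a a = 0. Proof. exact: PeanoNat.Nat.lxor_nilpotent. Qed.
HB.instance Definition _ := Monoid.isComLaw.Build nat 0 xr xrA xrC xr0.

Lemma expn_pow t : 2 ^ t = Nat.pow 2 t.
Proof. elim: t => // t IH; rewrite expnS IH /=; lia. Qed.

Lemma xr_lt t a b : a < 2 ^ t -> b < 2 ^ t -> xr a b < 2 ^ t.
Proof.
have E : forall c, (c < 2 ^ t) = (Nat.shiftr c t == 0).
  move=> c; rewrite PeanoNat.Nat.shiftr_div_pow2.
  have H2 : Nat.pow 2 t <> 0 by apply: PeanoNat.Nat.pow_nonzero.
  have := PeanoNat.Nat.div_small_iff c _ H2.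
  rewrite -expn_pow => -[h1 h2]; apply/idP/eqP => h.
    by apply: h2; apply/ltP.
  by apply/ltP; apply: h1.
rewrite !E /xr PeanoNat.Nat.shiftr_lxor => /eqP -> /eqP ->; done.
Qed.

Definition flip (N : nat) (y : vtx N) (q : 'I_N) : vtx N := [ffun r => y r (+) (r == q)].

Lemma flipK N (y : vtx N) q : flip (flip y q) q = y.
Proof. by apply/ffunP => r; rewrite !ffunE addbK. Qed.

Lemma flip_inj N (q : 'I_N) : injective (fun y : vtx N => flip y q).
Proof. by move=> a b /(congr1 (fun y => flip y q)); rewrite !flipK. Qed.

Lemma flip_at N (y : vtx N) q : flip y q q = ~~ y q.
Proof. by rewrite ffunE eqxx addbT. Qed.

Lemma sum_eq_lt (s n : nat) : \sum_(v < n) (s == v :> nat : nat) = (s < n).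
Proof.
elim: n => [|n IH]; first by rewrite big_ord0.
rewrite big_ord_recr /= IH ltnS leq_eqVlt.
case: (ltngtP s n) => h; rewrite ?h /=; try lia.
Qed.


Lemma hdist_flip M (x : vtx M) q : hdist x (flip x q) = 1.
Proof.
rewrite /hdist (_ : [set i | x i != flip x q i] = [set q]) ?cards1 //.
by apply/setP => i; rewrite !inE ffunE; case: (i == q); case: (x i).
Qed.

Lemma flip_neq M (x : vtx M) q : flip x q != x.
Proof. by apply/eqP => /ffunP /(_ q); rewrite flip_at; case: (x q). Qed.

Lemma qedgeP M (e : {set vtx M}) : e \in qedges M -> exists x q, e = [set x; flip x q].
Proof.
rewrite inE => /existsP [x /existsP [y /andP [/eqP -> /cards1P [q E]]]].
exists x, q; congr [set x; _]; apply/ffunP => i.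
have hi : (x i != y i) = (i == q) by rewrite -(in_set1 i q) -E inE.
by rewrite ffunE -hi; case: (x i); case: (y i).
Qed.

Lemma qedge_flip M (x : vtx M) q : [set x; flip x q] \in qedges M.
Proof.
by rewrite inE; apply/existsP; exists x; apply/existsP; exists (flip x q); rewrite eqxx hdist_flip.
Qed.

Section Construction.
Variables m k : nat.
Hypothesis hk : 0 < k.

Local Notation N := (m * k).
Local Notation V := (vtx (m * k)).

Lemma blk_proof (q : 'I_N) : q %/ k < m.
Proof. by rewrite ltn_divLR // ltn_ord. Qed.
Definition blk (q : 'I_N) : 'I_m := Ordinal (blk_proof q).
Definition lab (q : 'I_N) := (q %% k).+1.
Lemma pos_proof (l : 'I_m) v : l * k + v.-1 %% k < m * k.
Proof.
have h1 := ltn_pmod v.-1 hk; have h2 := ltn_ord l.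
have : l.+1 * k <= m * k by rewrite leq_mul2r h2 orbT.
rewrite mulSn; lia.
Qed.
Definition pos (l : 'I_m) v : 'I_N := Ordinal (pos_proof l v).

Lemma blk_pos l v : blk (pos l v) = l.
Proof.
apply: val_inj => /=; rewrite divnMDl // divn_small ?addn0 //.
exact: ltn_pmod.
Qed.

Lemma lab_pos l v : 0 < v <= k -> lab (pos l v) = v.
Proof.
move=> /andP [h1 h2]; rewrite /lab /= modnMDl modn_mod modn_small; lia.
Qed.

Definition sig (l : 'I_m) (y : V) : nat :=
  \big[xr/0]_(q | blk q == l) (if y q then lab q else 0).

Lemma sig_flip l y q :
  sig l (flip y q) = if blk q == l then xr (sig l y) (lab q) else sig l y.
Proof.
rewrite /sig; case: ifP => H.
  rewrite (bigD1 q) //= [in RHS](bigD1 q) //= flip_at.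
  rewrite (eq_bigr (fun i => if y i then lab i else 0)); last first.
    by move=> i /andP [_ hi]; rewrite ffunE (negbTE hi) addbF.
  case: (y q) => /=; last by rewrite xr0 xrC.
  by rewrite xr0 [xr (lab q) _]xrC -xrA xrr [xr _ 0]xrC xr0.
apply: eq_bigr => i hi; rewrite ffunE.
suff -> : (i == q) = false by rewrite addbF.
by apply/negbTE/eqP => E; move: H; rewrite -E hi.
Qed.

Lemma sig_local l (y z : V) : (forall q, blk q == l -> y q = z q) -> sig l y = sig l z.
Proof. by move=> h; apply: eq_bigr => q /h ->. Qed.

Lemma sig_le t l y : k = 2 ^ t - 1 -> sig l y <= k.
Proof.
move=> ek.
have ht : 0 < 2 ^ t by rewrite expn_gt0.
suff : sig l y < 2 ^ t by lia.
apply: (big_ind (fun s => s < 2 ^ t)) => //; first exact: xr_lt.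
move=> q _; case: (y q) => //; rewrite /lab.
have := ltn_pmod q hk; lia.
Qed.

Definition C l := \sum_(y : V) (sig l y == 0 : nat).

Lemma class_bound l : C l * k.+1 <= 2 ^ N.
Proof.
have Hv : forall v : 'I_k.+1, C l <= \sum_(y : V) (sig l y == v : nat).
  move=> [[|v] hv]; first done.
  rewrite (reindex_inj (@flip_inj _ (pos l v.+1))) /=.
  apply: leq_sum => y _; case: eqP => // H.
  by rewrite sig_flip blk_pos eqxx H xr0 lab_pos // eqxx.
apply: (@leq_trans (\sum_(v < k.+1) \sum_(y : V) (sig l y == v : nat))).
  rewrite mulnC -[k.+1 in X in X <= _]card_ord -sum_nat_const.
  by apply: leq_sum => v _; apply: Hv.
rewrite exchange_big /=.
apply: (@leq_trans (\sum_(y : V) 1)).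
  by apply: leq_sum => y _; rewrite sum_eq_lt; case: (_ < _).
by rewrite sum1_card card_ffun card_bool card_ord.
Qed.

Definition D l (q : 'I_N) := \sum_(y : V) (~~ y q && (sig l y == 0) : nat).

Lemma half_bound l q : blk q != l -> 2 * D l q <= C l.
Proof.
move=> hq.
have E : D l q = \sum_(y : V) (y q && (sig l y == 0) : nat).
  rewrite /D (reindex_inj (@flip_inj _ q)) /=.
  apply: eq_bigr => y _; rewrite flip_at negbK sig_flip (negbTE hq) //.
suff -> : C l = D l q + D l q by lia.
rewrite {2}E /C -big_split /=.
by apply: eq_bigr => y _; case: (y q); case: (_ == _).
Qed.


Definition inZ (y : V) := [exists l, sig l y == 0].
Definition G : {set {set V}} := [set e in qedges N | [exists z in e, inZ z]].

Lemma G_card : #|G| * k.+1 * 2 <= N * (m.+1 * 2 ^ N).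
Proof.
pose S := [set yq : V * 'I_N | (sig (blk yq.2) yq.1 == 0) ||
   (~~ yq.1 yq.2 && [exists l, (l != blk yq.2) && (sig l yq.1 == 0)])].
have sub : G \subset [set [set yq.1; flip yq.1 yq.2] | yq in S].
  apply/subsetP => e; rewrite inE => /andP [/qedgeP [x [q ->]]].
  move=> /existsP [z /andP [hz /existsP [l hl]]].
  have ez : [set x; flip x q] = [set z; flip z q].
    by case/set2P: hz => ->; rewrite ?flipK // setUC.
  rewrite ez; case: (boolP (l == blk q)) => hlq.
    by apply/imsetP; exists (z, q) => //; rewrite inE /= -(eqP hlq) hl.
  pose w := if z q then flip z q else z.
  have ew : [set z; flip z q] = [set w; flip w q].
    by rewrite /w; case: (z q); rewrite ?flipK // setUC.
  have sw : sig l w = sig l z.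
    by rewrite /w; case: (z q) => //; rewrite sig_flip eq_sym (negbTE hlq).
  have wq : ~~ w q by rewrite /w; case: ifP => h; rewrite ?flip_at ?h.
  apply/imsetP; exists (w, q) => //=; rewrite inE /= wq; apply/orP; right.
  by apply/existsP; exists l; rewrite hlq sw hl.
have cS : #|G| <= \sum_(q : 'I_N) (C (blk q) + \sum_(l | l != blk q) D l q).
  apply: (leq_trans (subset_leq_card sub)); apply: (leq_trans (leq_imset_card _ _)).
  rewrite -sum1_card big_mkcond /=.
  apply: (@leq_trans (\sum_(yq : V * 'I_N) ((sig (blk yq.2) yq.1 == 0 : nat) +
        \sum_(l | l != blk yq.2) (~~ yq.1 yq.2 && (sig l yq.1 == 0) : nat)))).
    apply: leq_sum => -[y q] _; rewrite inE /=.
    case: (sig (blk q) y == 0) => //=.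
    case: (boolP (~~ y q && _)) => //= /andP [hy /existsP [l /andP [hl hs]]].
    by rewrite (bigD1 l) //= hy hs.
  rewrite -(pair_bigA _ (fun y q => (sig (blk q) y == 0 : nat) +
        \sum_(l | l != blk q) (~~ y q && (sig l y == 0) : nat))) /=.
  rewrite exchange_big /=; apply: leq_sum => q _.
  rewrite big_split /= leq_add2l /D exchange_big /=.
  done.
apply: (@leq_trans ((\sum_(q : 'I_N) (C (blk q) + \sum_(l | l != blk q) D l q)) * k.+1 * 2)).
  by rewrite !leq_mul2r cS !orbT.
rewrite !big_distrl /=.
have -> : N * (m.+1 * 2 ^ N) = \sum_(q : 'I_N) (m.+1 * 2 ^ N) by rewrite sum_nat_const card_ord.
apply: leq_sum => q _.
rewrite !mulnDl.
have -> : (\sum_(l | l != blk q) D l q) * k.+1 * 2 =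
    \sum_(l | l != blk q) (D l q * k.+1 * 2).
  rewrite -mulnA big_distrl; apply: eq_bigr => l _; exact: mulnA.

have h1 : C (blk q) * k.+1 * 2 <= 2 * 2 ^ N.
  by rewrite mulnC leq_mul2l class_bound.
have h2 : \sum_(l | l != blk q) (D l q * k.+1 * 2) <= m.-1 * 2 ^ N.
  apply: (@leq_trans (\sum_(l | l != blk q) 2 ^ N)).
    apply: leq_sum => l hl; rewrite -mulnA [k.+1 * 2]mulnC mulnA [D l q * 2]mulnC.
    apply: leq_trans (class_bound l).
    by rewrite leq_mul2r half_bound ?orbT // eq_sym.
  by rewrite sum_nat_const cardC1 card_ord.
have h3 : 2 * 2 ^ N + m.-1 * 2 ^ N <= m.+1 * 2 ^ N.
  have hm : 0 < m by case: (m) (blk q) => [[]|].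
  by rewrite -mulnDl leq_mul2r; apply/orP; right; move: hm; case: (m).
exact: leq_trans (leq_add h1 h2) h3.
Qed.

Lemma imset_set2 (T T' : finType) (f : T -> T') a b : f @: [set a; b] = [set f a; f b].
Proof. by rewrite imsetU1 imset_set1. Qed.

Definition dir (x : V) (p : 'I_N) (i : 'I_m) : 'I_N :=
  if i == blk p then p else pos i (sig i x).
Definition inv (x : V) (p : 'I_N) (r : 'I_N) := [pick i | dir x p i == r].
Definition phi (x : V) (p : 'I_N) : {ffun vtx m -> V} :=
  [ffun a : vtx m => [ffun r => x r (+) (if inv x p r is Some i then a i else false)]].

Lemma blk_dir x p i : blk (dir x p i) = i.
Proof. by rewrite /dir; case: eqP => [->|_] //; rewrite blk_pos. Qed.

Lemma dir_inj x p : injective (dir x p).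
Proof. by move=> i i' E; rewrite -(blk_dir x p i) E blk_dir. Qed.

Lemma inv_dir x p i : inv x p (dir x p i) = Some i.
Proof.
rewrite /inv; case: pickP => [i' /eqP /dir_inj -> // | /(_ i)]; by rewrite eqxx.
Qed.

Lemma phi_dir x p a i : phi x p a (dir x p i) = x (dir x p i) (+) a i.
Proof. by rewrite !ffunE inv_dir. Qed.

Lemma phi_flip x p a i : phi x p (flip a i) = flip (phi x p a) (dir x p i).
Proof.
apply/ffunP => r; rewrite !ffunE /inv.
case: pickP => [i' /eqP <- | H].
  by rewrite ffunE -addbA (inj_eq (@dir_inj x p)).
have Hi : (r == dir x p i) = false by rewrite eq_sym; exact: (H i).
by rewrite Hi !addbF.
Qed.

Lemma phi_inj x p : injective (phi x p).
Proof.
move=> a b E; apply/ffunP => i.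
have := congr1 (fun f : V => f (dir x p i)) (congr1 (fun g : {ffun _} => g) E).
by rewrite /= !phi_dir; move/addbI.
Qed.

Definition z0 : vtx m := [ffun _ => false].

Lemma phi0 x p : phi x p z0 = x.
Proof. by apply/ffunP => r; rewrite !ffunE; case: (inv x p r) => [i|]; rewrite ?ffunE addbF. Qed.

Lemma phi_Z t (x : V) (p : 'I_N) (a : vtx m) (l : 'I_m) : k = 2 ^ t - 1 -> sig l x != 0 -> l != blk p -> a l -> inZ (phi x p a).
Proof.
move=> ek hx hl hal; apply/existsP; exists l.
rewrite (@sig_local l _ (flip x (dir x p l))).
  rewrite sig_flip blk_dir eqxx /dir (negbTE hl) lab_pos ?xrr //.
  by rewrite lt0n hx (sig_le _ _ ek).
move=> q hq; rewrite !ffunE /inv; case: pickP => [i /eqP E | H].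
  have il : i = l by apply/eqP; rewrite -(blk_dir x p i) E.
  by rewrite -E il hal eqxx.
have Hl : (q == dir x p l) = false by rewrite eq_sym; exact: (H l).
by rewrite Hl.
Qed.

Lemma copy_mono (E E' : {set {set V}}) w : E \subset E' -> is_copy m E w -> is_copy m E' w.
Proof.
case: w => W F sEE' /and3P [hF h2 h3]; apply/and3P; split => //.
exact: subset_trans hF sEE'.
Qed.

Lemma G_semisat t : k = 2 ^ t - 1 -> semisat m G.
Proof.
move=> ek; apply/andP; split.
  by apply/subsetP => e; rewrite inE => /andP [].
apply/forall_inP => e; rewrite inE => /andP [heG heQ].
have [x [p ex]] := qedgeP heQ; subst e.
have hx : forall l, sig l x != 0.
  move=> l; apply: (contra _ heG) => h; rewrite inE qedge_flip /=.
  by apply/existsP; exists x; rewrite set21 /=; apply/existsP; exists l.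
pose W := phi x p @: setT.
pose F := [set f | [exists a, exists i, f == [set phi x p a; phi x p (flip a i)]]].
have hF : forall a b, ([set phi x p a; phi x p b] \in F) = ([set a; b] \in qedges m).
  move=> a b; apply/idP/idP.
    rewrite inE => /existsP [a' /existsP [i /eqP E]].
    rewrite -!imset_set2 in E; rewrite (imset_inj (@phi_inj x p) E); exact: qedge_flip.
  move/qedgeP => [a' [i E]]; rewrite inE; apply/existsP; exists a'; apply/existsP; exists i.
  by rewrite -!imset_set2 E.
have eF : [set x; flip x p] \in F.
  rewrite inE; apply/existsP; exists z0; apply/existsP; exists (blk p).
  by rewrite phi_flip phi0 /dir eqxx.
apply: proper_card; apply/properP; split.
  apply/subsetP => w; rewrite !inE; apply: copy_mono; exact: subsetU1.
exists (W, F); last first.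
  rewrite inE /is_copy; apply/negP => /and3P [/subsetP hs _ _].
  by move: heG; rewrite hs.
rewrite inE /is_copy; apply/and3P; split.
- apply/subsetP => f; rewrite inE => /existsP [a /existsP [i /eqP ->]].
  have memG : forall e, (e \in G) = (e \in qedges N) && [exists z in e, inZ z].
    by move=> e'; rewrite inE.
  rewrite phi_flip in_setU1 memG qedge_flip /=.
  case: (boolP [exists l, (l != blk p) && a l]) => [/existsP [l /andP [hl hal]]|na].
    apply/orP; right; apply/existsP; exists (phi x p a); rewrite set21 /=.
    exact: (phi_Z ek (hx l) hl hal).
  case: (boolP [exists l, (l != blk p) && flip a i l]) => [/existsP [l /andP [hl hal]]|nb].
    apply/orP; right; apply/existsP; exists (flip (phi x p a) (dir x p i)); rewrite set22 /=.
    rewrite -phi_flip; exact: (phi_Z ek (hx l) hl hal).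
  have za : forall b : vtx m, ~~ [exists l, (l != blk p) && b l] ->
      b = if b (blk p) then flip z0 (blk p) else z0.
    move=> b nb'; apply/ffunP => l; case: (eqVneq l (blk p)) => [->|hl].
      by case: (b (blk p)); rewrite ?flip_at !ffunE.
    have : ~~ ((l != blk p) && b l) by apply: contra nb' => h; apply/existsP; exists l.
    rewrite hl /= => /negbTE ->; case: (b (blk p)); rewrite !ffunE ?(negbTE hl) //.
  have ii : i = blk p.
    apply/eqP; apply: contraNT nb => hi; apply/existsP; exists i; rewrite hi flip_at /=.
    apply/negP => hai; move: na => /existsP; apply; exists i; by rewrite hi hai.
  subst i; apply/orP; left; rewrite (za a na).
  case: (a (blk p)); rewrite ?phi_flip phi0 /dir eqxx ?flipK //.
  by rewrite setUC.
- apply/forall_inP => f; rewrite inE => /existsP [a /existsP [i /eqP ->]].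
  by apply/subsetP => y; rewrite !inE => /orP [] /eqP ->; apply: imset_f.
- apply/existsP; exists (phi x p); rewrite eqxx /=; apply/andP; split.
    by apply/injectiveP; exact: phi_inj.
  by apply/forallP => a; apply/forallP => b; rewrite hF eqxx.
Qed.

End Construction.

Theorem mainTheorem7 (m t n : nat) :
  1 <= m -> 1 <= t -> n = m * (2 ^ t - 1) ->
  2 * ssat n m <= (m ^ 2 + m) * 2 ^ n.
Proof.
move=> hm ht ->.
have hT : 1 < 2 ^ t by rewrite -{1}(expn0 2) ltn_exp2l.
set k := 2 ^ t - 1.
have hk : 0 < k by rewrite /k; lia.
have ek : k.+1 = 2 ^ t by rewrite /k; lia.
have Hs := @G_semisat m k hk t (erefl k).
have Hc := @G_card m k hk.
rewrite /ssat; case: ex_minnP => s _ Hmin.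
have hs : s <= #|G m hk|.
  by apply: Hmin; apply/existsP; exists (G m hk); rewrite Hs eqxx.
rewrite ek in Hc.
set P := 2 ^ (m * k) in Hc *.
set g := #|G m hk| in hs Hc.
have hT0 : 0 < 2 ^ t by lia.
rewrite -(leq_pmul2r hT0).
apply: (@leq_trans (g * 2 ^ t * 2)).
  by rewrite [g * _ * _]mulnC mulnA leq_mul2r leq_mul2l hs !orbT.
apply: (leq_trans Hc).
have : m * k <= m * 2 ^ t by rewrite leq_mul2l; apply/orP; right; lia.
move=> h; apply: (@leq_trans (m * 2 ^ t * (m.+1 * P))); first by rewrite leq_mul2r h orbT.
rewrite (_ : m ^ 2 + m = m * m.+1); last by rewrite mulnS expnS expn1 addnC.
by rewrite [m * 2 ^ t]mulnC -!mulnA [2 ^ t * _]mulnC !mulnA.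
Qed.
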